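(* Let $\Phi$ be a nonempty finite set of Boolean formulas built from variables and the constants $\mathrm{True},\mathrm{False}$ using $\wedge$, $\vee$, $\neg$, and let $X$ be the set of variables occurring in $\Phi$. Assume $\Phi$ is overall read-once, i.e., every variable of $X$ occurs exactly once in total across all the formulas of $\Phi$, and that every $\phi\in\Phi$ is non-simplifiable, i.e., $\phi$ is either one of the constants $\mathrm{True}$ or $\mathrm{False}$, or contains no occurrence of a constant. Then $\Phi$ is evasive (with respect to $X$), i.e., every BDD for $\Phi$ has depth $|X|$. *)

(* Defs.v *)
From mathcomp Require Import all_boot.

Set Implicit Arguments.
Unset Strict Implicit.
Unset Printing Implicit Defensive.

Inductive form : Type :=
| FVar of nat
| FTrue
| FFalse
| FAnd of form & form
| FOr of form & form
| FNot of form.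

Fixpoint eval (a : nat -> bool) (f : form) : bool :=
  match f with
  | FVar v => a v
  | FTrue => true
  | FFalse => false
  | FAnd f g => eval a f && eval a g
  | FOr f g => eval a f || eval a g
  | FNot f => ~~ eval a f
  end.

Fixpoint occ (f : form) : seq nat :=
  match f with
  | FVar v => [:: v]
  | FTrue | FFalse => [::]
  | FAnd f g | FOr f g => occ f ++ occ g
  | FNot f => occ f
  end.

Fixpoint has_const (f : form) : bool :=
  match f with
  | FVar _ => false
  | FTrue | FFalse => true
  | FAnd f g | FOr f g => has_const f || has_const g
  | FNot f => has_const f
  end.

Definition non_simplifiable (f : form) : Prop :=
  f = FTrue \/ f = FFalse \/ has_const f = false.

Definition all_occ (Phi : seq form) : seq nat := flatten (map occ Phi).

Definition vars (Phi : seq form) : seq nat := undup (all_occ Phi).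

Definition overall_read_once (Phi : seq form) : Prop := uniq (all_occ Phi).

(* A BDD for a family of formulas, represented by its (unfolded) decision tree:
   internal nodes test a variable, leaves carry the tuple of output values
   (one Boolean per formula of Phi, in the order of the list Phi).
   Unfolding a BDD (DAG) into a tree preserves its semantics and its depth
   (length of a longest root-to-leaf path). *)
Inductive bdd : Type :=
| Leaf of seq bool
| Node of nat & bdd & bdd.

Fixpoint run (a : nat -> bool) (t : bdd) : seq bool :=
  match t with
  | Leaf o => o
  | Node x t0 t1 => if a x then run a t1 else run a t0
  end.

Fixpoint depth (t : bdd) : nat :=
  match t with
  | Leaf _ => 0
  | Node _ t0 t1 => (maxn (depth t0) (depth t1)).+1
  end.

Fixpoint wf_bdd (X : seq nat) (tested : seq nat) (t : bdd) : bool :=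
  match t with
  | Leaf _ => true
  | Node x t0 t1 =>
      [&& x \in X, x \notin tested,
          wf_bdd X (x :: tested) t0 & wf_bdd X (x :: tested) t1]
  end.

Definition is_bdd_for (Phi : seq form) (t : bdd) : Prop :=
  wf_bdd (vars Phi) [::] t /\
  forall a : nat -> bool, run a t = map (eval a) Phi.

Definition evasive (Phi : seq form) : Prop :=
  forall t : bdd, is_bdd_for Phi t -> depth t = size (vars Phi).

(* Main.v *)
Require Import Defs.
From mathcomp Require Import all_boot.
From Stdlib Require List.

Set Implicit Arguments.
Unset Strict Implicit.
Unset Printing Implicit Defensive.

Definition upd (a : nat -> bool) x b := fun v => if v == x then b else a v.

Lemma eval_ext a a' f : (forall v, v \in occ f -> a v = a' v) -> eval a f = eval a' f.
Proof.
elim: f => //= [v|f IHf g IHg|f IHf g IHg|f IHf] H.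
- by apply: H; rewrite inE.
- by rewrite IHf ?IHg // => v Hv; apply: H; rewrite mem_cat Hv ?orbT.
- by rewrite IHf ?IHg // => v Hv; apply: H; rewrite mem_cat Hv ?orbT.
- by rewrite IHf.
Qed.

Lemma eval_upd a x b f : x \notin occ f -> eval (upd a x b) f = eval a f.
Proof.
move=> Hx; apply: eval_ext => v Hv; rewrite /upd.
case: eqP => // E; subst; by rewrite Hv in Hx.
Qed.

Lemma uniq_disj (s1 s2 : seq nat) x : uniq (s1 ++ s2) -> x \in s1 -> x \notin s2.
Proof.
rewrite cat_uniq => /and3P [_ /hasPn H _] x1; apply/negP => x2.
by move: (H x x2); rewrite /= x1.
Qed.

Lemma uniq_disj2 (s1 s2 : seq nat) x : uniq (s1 ++ s2) -> x \in s2 -> x \notin s1.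
Proof. by move=> H x2; apply/negP => x1; move: (uniq_disj H x1); rewrite x2. Qed.

Definition comb (f : form) (a1 a2 : nat -> bool) := fun v => if v \in occ f then a1 v else a2 v.

Lemma comb_l f a1 a2 : eval (comb f a1 a2) f = eval a1 f.
Proof. by apply: eval_ext => v Hv; rewrite /comb Hv. Qed.

Lemma comb_r f g a1 a2 : uniq (occ f ++ occ g) -> eval (comb f a1 a2) g = eval a2 g.
Proof.
move=> U; apply: eval_ext => v Hv; rewrite /comb.
by rewrite (negbTE (uniq_disj2 U Hv)).
Qed.

Lemma sat f : has_const f = false -> uniq (occ f) -> forall c, exists a, eval a f = c.
Proof.
elim: f => [v|||f IHf g IHg|f IHf g IHg|f IHf] //= hc U c.
- by exists (fun _ => c).
- move: hc => /norP [/negbTE h1 /negbTE h2].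
  have Uf : uniq (occ f) by move: U; rewrite cat_uniq => /and3P [].
  have Ug : uniq (occ g) by move: U; rewrite cat_uniq => /and3P [].
  have [a1 H1] := IHf h1 Uf c; have [a2 H2] := IHg h2 Ug true.
  by exists (comb f a1 a2); rewrite comb_l (comb_r _ _ U) H1 H2 andbT.
- move: hc => /norP [/negbTE h1 /negbTE h2].
  have Uf : uniq (occ f) by move: U; rewrite cat_uniq => /and3P [].
  have Ug : uniq (occ g) by move: U; rewrite cat_uniq => /and3P [].
  have [a1 H1] := IHf h1 Uf c; have [a2 H2] := IHg h2 Ug false.
  by exists (comb f a1 a2); rewrite comb_l (comb_r _ _ U) H1 H2 orbF.
- have [a H] := IHf hc U (~~ c); by exists a; rewrite H negbK.
Qed.

Lemma uniq_l (s1 s2 : seq nat) : uniq (s1 ++ s2) -> uniq s1.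
Proof. by rewrite cat_uniq => /and3P []. Qed.
Lemma uniq_r (s1 s2 : seq nat) : uniq (s1 ++ s2) -> uniq s2.
Proof. by rewrite cat_uniq => /and3P []. Qed.

Lemma sens f x : has_const f = false -> uniq (occ f) -> x \in occ f ->
  exists a, eval (upd a x true) f != eval (upd a x false) f.
Proof.
elim: f => [v|||f IHf g IHg|f IHf g IHg|f IHf] //= hc U.
- rewrite inE => /eqP ->; exists (fun _ => true); by rewrite /upd eqxx.
- move: hc => /norP [/negbTE h1 /negbTE h2].
  rewrite mem_cat => /orP [xf|xg].
  + have [a1 H1] := IHf h1 (uniq_l U) xf.
    have [a2 H2] := sat h2 (uniq_r U) true.
    exists (comb f a1 a2).
    have E : forall b, eval (upd (comb f a1 a2) x b) f = eval (upd a1 x b) f.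
      move=> b; apply: eval_ext => v Hv; by rewrite /upd /comb Hv.
    have E2 : forall b, eval (upd (comb f a1 a2) x b) g = eval a2 g.
      move=> b; rewrite eval_upd ?(uniq_disj U xf) //; exact: comb_r.
    by rewrite !E !E2 H2 !andbT.
  + have [a2 H2] := IHg h2 (uniq_r U) xg.
    have [a1 H1] := sat h1 (uniq_l U) true.
    exists (comb f a1 a2).
    have E : forall b, eval (upd (comb f a1 a2) x b) f = eval a1 f.
      move=> b; rewrite eval_upd ?(uniq_disj2 U xg) //; exact: comb_l.
    have E2 : forall b, eval (upd (comb f a1 a2) x b) g = eval (upd a2 x b) g.
      move=> b; apply: eval_ext => v Hv; rewrite /upd /comb.
      by rewrite (negbTE (uniq_disj2 U Hv)).
    by rewrite !E !E2 H1.
- move: hc => /norP [/negbTE h1 /negbTE h2].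
  rewrite mem_cat => /orP [xf|xg].
  + have [a1 H1] := IHf h1 (uniq_l U) xf.
    have [a2 H2] := sat h2 (uniq_r U) false.
    exists (comb f a1 a2).
    have E : forall b, eval (upd (comb f a1 a2) x b) f = eval (upd a1 x b) f.
      move=> b; apply: eval_ext => v Hv; by rewrite /upd /comb Hv.
    have E2 : forall b, eval (upd (comb f a1 a2) x b) g = eval a2 g.
      move=> b; rewrite eval_upd ?(uniq_disj U xf) //; exact: comb_r.
    by rewrite !E !E2 H2 !orbF.
  + have [a2 H2] := IHg h2 (uniq_r U) xg.
    have [a1 H1] := sat h1 (uniq_l U) false.
    exists (comb f a1 a2).
    have E : forall b, eval (upd (comb f a1 a2) x b) f = eval a1 f.
      move=> b; rewrite eval_upd ?(uniq_disj2 U xg) //; exact: comb_l.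
    have E2 : forall b, eval (upd (comb f a1 a2) x b) g = eval (upd a2 x b) g.
      move=> b; apply: eval_ext => v Hv; rewrite /upd /comb.
      by rewrite (negbTE (uniq_disj2 U Hv)).
    by rewrite !E !E2 H1.
- move=> xf; have [a H] := IHf hc U xf; exists a; by rewrite (inj_eq negb_inj).
Qed.

Definition cst (c : bool) := if c then FTrue else FFalse.
Definition mkNot f := match f with FTrue => FFalse | FFalse => FTrue | _ => FNot f end.
Definition mkAnd f g := match f with
  | FFalse => FFalse | FTrue => g
  | _ => match g with FFalse => FFalse | FTrue => f | _ => FAnd f g end end.
Definition mkOr f g := match f with
  | FTrue => FTrue | FFalse => g
  | _ => match g with FTrue => FTrue | FFalse => f | _ => FOr f g end end.

Fixpoint red x b f := match f with
  | FVar v => if v == x then cst b else FVar v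
  | FTrue => FTrue | FFalse => FFalse
  | FAnd f g => mkAnd (red x b f) (red x b g)
  | FOr f g => mkOr (red x b f) (red x b g)
  | FNot f => mkNot (red x b f) end.

Lemma eval_red a x b f : eval a (red x b f) = eval (upd a x b) f.
Proof.
elim: f => [v|||f IHf g IHg|f IHf g IHg|f IHf] //=.
- rewrite /upd; case: (v == x) => //; by case: b.
- rewrite -IHf -IHg; case: (red x b f) => *; case: (red x b g) => * //=;
   by rewrite ?andbT ?andbF.
- rewrite -IHf -IHg; case: (red x b f) => *; case: (red x b g) => * //=;
   by rewrite ?orbT ?orbF.
- rewrite -IHf; by case: (red x b f).
Qed.

Lemma mkAnd_cf f g : has_const f = false -> has_const g = false -> mkAnd f g = FAnd f g.
Proof. by case: f => [?|||??|??|?] ? //; case: g. Qed.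
Lemma mkOr_cf f g : has_const f = false -> has_const g = false -> mkOr f g = FOr f g.
Proof. by case: f => [?|||??|??|?] ? //; case: g. Qed.
Lemma mkNot_cf f : has_const f = false -> mkNot f = FNot f.
Proof. by case: f. Qed.

Lemma red_id x b f : has_const f = false -> x \notin occ f -> red x b f = f.
Proof.
elim: f => [v|||f IHf g IHg|f IHf g IHg|f IHf] //=.
- by move=> _; rewrite inE eq_sym => /negbTE ->.
- move=> /norP [/negbTE h1 /negbTE h2]; rewrite mem_cat => /norP [n1 n2].
  by rewrite IHf // IHg // mkAnd_cf.
- move=> /norP [/negbTE h1 /negbTE h2]; rewrite mem_cat => /norP [n1 n2].
  by rewrite IHf // IHg // mkOr_cf.
- by move=> h n; rewrite IHf // mkNot_cf.
Qed.

Lemma filterC1_id x (s : seq nat) : x \notin s -> filter (predC1 x) s = s.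
Proof.
elim: s => //= y s IH; rewrite inE => /norP [n1 n2].
by rewrite eq_sym n1 IH.
Qed.

Lemma red_step x f : has_const f = false -> uniq (occ f) -> x \in occ f ->
  (exists b, has_const (red x b f) = false /\
     occ (red x b f) = filter (predC1 x) (occ f)) \/
  (occ f = [:: x] /\ forall c, exists b, red x b f = cst c).
Proof.
elim: f => [v|||f IHf g IHg|f IHf g IHg|f IHf] //= hc U.
- rewrite inE => /eqP ->; right; split => // c; exists c; by rewrite eqxx.
- move: hc => /norP [/negbTE h1 /negbTE h2].
  rewrite mem_cat => /orP [xf|xg].
  + have ng := uniq_disj U xf.
    case: (IHf h1 (uniq_l U) xf) => [[b [c1 o1]]|[o1 H]].
    * left; exists b; rewrite (red_id _ h2 ng) mkAnd_cf //=.
      by rewrite h2 c1 o1 filter_cat (filterC1_id ng); split.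
    * have [b Hb] := H true; left; exists b.
      by rewrite Hb (red_id _ h2 ng) /= h2 o1 /= eqxx /= (filterC1_id ng); split.
  + have nf := uniq_disj2 U xg.
    case: (IHg h2 (uniq_r U) xg) => [[b [c1 o1]]|[o1 H]].
    * left; exists b; rewrite (red_id _ h1 nf) mkAnd_cf //=.
      by rewrite h1 c1 o1 filter_cat (filterC1_id nf); split.
    * have [b Hb] := H true; left; exists b.
      rewrite Hb (red_id _ h1 nf) o1 /= filter_cat /= eqxx cats0 (filterC1_id nf).
      by case: f h1 {IHf U nf xg} => //= *; split.
- move: hc => /norP [/negbTE h1 /negbTE h2].
  rewrite mem_cat => /orP [xf|xg].
  + have ng := uniq_disj U xf.
    case: (IHf h1 (uniq_l U) xf) => [[b [c1 o1]]|[o1 H]].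
    * left; exists b; rewrite (red_id _ h2 ng) mkOr_cf //=.
      by rewrite h2 c1 o1 filter_cat (filterC1_id ng); split.
    * have [b Hb] := H false; left; exists b.
      by rewrite Hb (red_id _ h2 ng) /= h2 o1 /= eqxx /= (filterC1_id ng); split.
  + have nf := uniq_disj2 U xg.
    case: (IHg h2 (uniq_r U) xg) => [[b [c1 o1]]|[o1 H]].
    * left; exists b; rewrite (red_id _ h1 nf) mkOr_cf //=.
      by rewrite h1 c1 o1 filter_cat (filterC1_id nf); split.
    * have [b Hb] := H false; left; exists b.
      rewrite Hb (red_id _ h1 nf) o1 /= filter_cat /= eqxx cats0 (filterC1_id nf).
      by case: f h1 {IHf U nf xg} => //= *; split.
- move=> xf; case: (IHf hc U xf) => [[b [c1 o1]]|[o1 H]].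
  + left; exists b; by rewrite mkNot_cf.
  + right; split => // c; have [b Hb] := H (~~ c); exists b; rewrite Hb; clear Hb; by case: c.
Qed.

Lemma in_split' (phi : form) l : List.In phi l -> exists l1 l2, l = l1 ++ phi :: l2.
Proof.
elim: l => //= a l IH [->|H]; first by exists [::], l.
by have [l1 [l2 ->]] := IH H; exists (a :: l1), l2.
Qed.

Lemma all_occ_split l1 phi l2 :
  all_occ (l1 ++ phi :: l2) = all_occ l1 ++ occ phi ++ all_occ l2.
Proof. by rewrite /all_occ map_cat flatten_cat. Qed.

Lemma occ_find x l : x \in all_occ l -> exists phi, List.In phi l /\ x \in occ phi.
Proof.
elim: l => //= a l IH; rewrite /all_occ /= mem_cat => /orP [H|H].
  by exists a; split; [left|].
by have [p [h1 h2]] := IH H; exists p; split; [right|].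
Qed.

Lemma occ_sub x l psi : List.In psi l -> x \in occ psi -> x \in all_occ l.
Proof.
elim: l => //= a l IH [->|H] Hx; rewrite /all_occ /= mem_cat.
  by rewrite Hx.
by rewrite (IH H Hx) orbT.
Qed.

Lemma map_ext_In (A B : Type) (f g : A -> B) l :
  (forall x, List.In x l -> f x = g x) -> map f l = map g l.
Proof.
elim: l => //= a l IH H; rewrite H; last by left.
by rewrite IH // => y Hy; apply: H; right.
Qed.

Fixpoint restr x b t := match t with
  | Leaf o => Leaf o
  | Node y t0 t1 => if y == x then restr x b (if b then t1 else t0)
                    else Node y (restr x b t0) (restr x b t1) end.

Lemma run_restr a x b t : run a (restr x b t) = run (upd a x b) t.
Proof.
elim: t => //= y t0 IH0 t1 IH1.
have ux : upd a x b x = b by rewrite /upd eqxx.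
case: eqP => [->|ne]; first by rewrite ux; clear ux; move: IH0 IH1; case: b.
have uy : upd a x b y = a y by rewrite /upd; case: eqP.
by rewrite /= uy IH0 IH1.
Qed.

Lemma depth_restr x b t : depth (restr x b t) <= depth t.
Proof.
elim: t => //= y t0 IH0 t1 IH1.
case: eqP => _.
  move: IH0 IH1; case: b => IH0 IH1; [apply: leq_trans IH1 _|apply: leq_trans IH0 _];
  by rewrite ltnW // ltnS ?leq_maxl ?leq_maxr.
by rewrite /= ltnS geq_max !leq_max IH0 IH1 orbT.
Qed.

Lemma wf_depth X t : uniq X -> forall tested, wf_bdd X tested t ->
  depth t <= count (fun v => v \notin tested) X.
Proof.
move=> UX; elim: t => //= y t0 IH0 t1 IH1 tested /and4P [yX yt w0 w1].
have E : count (fun v => v \notin tested) X =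
         (count (fun v => v \notin y :: tested) X).+1.
  have := count_predUI (fun v => v \notin y :: tested) (pred1 y) X.
  have -> : count (predU (fun v => v \notin y :: tested) (pred1 y)) X =
            count (fun v => v \notin tested) X.
    apply: eq_count => v /=; rewrite inE; case: eqP => [->|] //=.
    by rewrite orbF.
  have -> : count (predI (fun v => v \notin y :: tested) (pred1 y)) X = 0.
    apply/eqP; rewrite -leqn0 leqNgt -has_count; apply/hasPn => v _ /=.
    by rewrite /= in_cons negb_or; case: (v == y); rewrite ?andbF.
  by rewrite (count_uniq_mem _ UX) yX addn0 addn1.
by rewrite E ltnS geq_max IH0 // IH1.
Qed.

Lemma In_cat (q : form) l1 l2 : List.In q (l1 ++ l2) <-> List.In q l1 \/ List.In q l2.
Proof.
elim: l1 => /= [|a l IH]; first by split; [right|case].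
split.
  by case=> [->|/IH [H|H]]; [left; left|left; right|right].
by case=> [[->|H]|H]; [left|right; apply/IH; left|right; apply/IH; right].
Qed.

Lemma red_step' x f : non_simplifiable f -> uniq (occ f) -> x \in occ f ->
  exists b, non_simplifiable (red x b f) /\
     occ (red x b f) = filter (predC1 x) (occ f).
Proof.
move=> [->|[->|hc]] //= U xf.
case: (red_step hc U xf) => [[b [c1 o1]]|[o1 H]].
  by exists b; split => //; right; right.
have [b Hb] := H true; exists b; rewrite Hb o1 /= eqxx; split => //; by left.
Qed.

Lemma leaf_vars Phi : overall_read_once Phi ->
  (forall phi, List.In phi Phi -> non_simplifiable phi) ->
  (forall a a', map (eval a) Phi = map (eval a') Phi) -> vars Phi = [::].
Proof.
move=> RO NS C.
case E: (vars Phi) => [|x s] //.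
have xv : x \in vars Phi by rewrite E inE eqxx.
rewrite mem_undup in xv.
have [p [Ip xp]] := occ_find xv.
have [l1 [l2 El]] := in_split' Ip.
have Up : uniq (occ p) by move: RO; rewrite /overall_read_once El all_occ_split => /uniq_r /uniq_l.
have hc : has_const p = false by case: (NS p Ip) => [E1|[E1|//]]; rewrite E1 in xp.
have [a H] := sens hc Up xp.
move: (C (upd a x true) (upd a x false)); rewrite El !map_cat /=.
move=> /(congr1 (drop (size l1))); rewrite !drop_size_cat ?size_map // => -[e _].
by rewrite e eqxx in H.
Qed.

Lemma main n : forall t Phi, depth t <= n -> overall_read_once Phi ->
  (forall phi, List.In phi Phi -> non_simplifiable phi) ->
  (forall a, run a t = map (eval a) Phi) -> size (vars Phi) <= depth t.
Proof.
elim: n => [|n IH] [o|y t0 t1] Phi //= Hd RO NS H.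
- by rewrite (leaf_vars RO NS) // => a a'; rewrite -!H.
- by rewrite (leaf_vars RO NS) // => a a'; rewrite -!H.
have /andP [d0 d1] : (depth t0 <= n) && (depth t1 <= n) by move: Hd; rewrite ?ltnS geq_max.
case yin: (y \in all_occ Phi); last first.
  pose t' := restr y false t0.
  have Ht' : forall a, run a t' = map (eval a) Phi.
    move=> a; rewrite run_restr.
    have uy : upd a y false y = false by rewrite /upd eqxx.
    have := H (upd a y false); rewrite /= uy => ->.
    apply: map_ext_In => p Ip; apply: eval_upd; apply/negP => yp.
    by rewrite (occ_sub Ip yp) in yin.
  apply: leq_trans (IH _ _ (leq_trans (@depth_restr _ _ _) d0) RO NS Ht') _.
  apply: leq_trans (@depth_restr _ _ _) _; apply: leqW; exact: leq_maxl.
have [p [Ip yp]] := occ_find yin.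
have [l1 [l2 El]] := in_split' Ip.
have RO2 := RO; rewrite /overall_read_once El all_occ_split in RO2.
have Up : uniq (occ p) by move: RO2 => /uniq_r /uniq_l.
have n1 : y \notin all_occ l1 by apply: (uniq_disj2 RO2); rewrite mem_cat yp.
have n2 : y \notin all_occ l2 by apply: (uniq_disj (uniq_r RO2)).
have [b [nsb ob]] := red_step' (NS p Ip) Up yp.
pose Phi' := l1 ++ red y b p :: l2.
have AO : all_occ Phi' = filter (predC1 y) (all_occ Phi).
  by rewrite El !all_occ_split !filter_cat ob (filterC1_id n1) (filterC1_id n2).
have RO' : overall_read_once Phi' by rewrite /overall_read_once AO filter_uniq.
have NS' : forall phi, List.In phi Phi' -> non_simplifiable phi.
  move=> q /In_cat [Iq|[<-|Iq]] //; apply: NS; rewrite El; apply/In_cat.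
    by left.
  by right; right.
have Sz : size (vars Phi) = (size (vars Phi')).+1.
  rewrite /vars (undup_id RO) (undup_id RO') AO size_filter.
  rewrite -(count_predC (predC1 y) (all_occ Phi)) -addn1; congr (_ + _).
  rewrite (@eq_count _ _ (pred1 y)); last by move=> v /=; rewrite negbK.
  by rewrite (count_uniq_mem _ RO) yin.
pose t' := restr y b (if b then t1 else t0).
have Ht' : forall a, run a t' = map (eval a) Phi'.
  move=> a; rewrite run_restr.
  have uy : upd a y b y = b by rewrite /upd eqxx.
  have := H (upd a y b); rewrite /= uy => E.
  have -> : run (upd a y b) (if b then t1 else t0) = map (eval (upd a y b)) Phi.
    by rewrite -E; case: (b).
  rewrite El !map_cat /= eval_red.
  congr (_ ++ _ :: _); apply: map_ext_In => q Iq; apply: eval_upd;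
    apply/negP => yq; [by rewrite (occ_sub Iq yq) in n1|by rewrite (occ_sub Iq yq) in n2].
have dt' : depth t' <= n by apply: leq_trans (@depth_restr _ _ _) _; case: (b).
rewrite Sz ltnS; apply: leq_trans (IH _ _ dt' RO' NS' Ht') _.
apply: leq_trans (@depth_restr _ _ _) _; case: (b); [exact: leq_maxr|exact: leq_maxl].
Qed.

Theorem proposition2 (Phi : seq form) :
  Phi <> [::] ->
  overall_read_once Phi ->
  (forall phi, List.In phi Phi -> non_simplifiable phi) ->
  evasive Phi.
Proof.
move=> _ RO NS t [wf H]; apply/eqP; rewrite eqn_leq.
rewrite (main (leqnn _) RO NS H) andbT.
have := wf_depth (undup_uniq _) wf.
by rewrite (@eq_count _ _ predT) ?count_predT.
Qed.
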